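(* Let $\mathbf V$ be a monoid variety such that the one-letter word $t$ is an isoterm for $\mathbf V$ and $\mathbf V$ satisfies $xtx\approx xtx^2$. If $\mathbb M_\gamma(a^+t)\not\subseteq\mathbf V$, then $\mathbf V$ satisfies $xtxs\approx xtxsx$.
   Context: Words are elements of the free monoid $\mathfrak A^*$ over a countably infinite alphabet. A word $\mathbf w$ is an isoterm for $\mathbf V$ if $\mathbf V$ satisfies no identity $\mathbf w\approx\mathbf w'$ with $\mathbf w'\ne\mathbf w$. Let $\tau_1$ be the congruence on $\mathfrak A^*$ generated by $a=aa$ for all letters $a$; $\mathbf u\,\gamma\,\mathbf v$ iff $\mathbf u\,\tau_1\,\mathbf v$ and $\mathbf u,\mathbf v$ have the same set of letters occurring at least twice. For $\gamma$-classes write $\mathtt v\le\mathtt u$ iff $\mathtt u=\mathtt p\mathtt v\mathtt s$ in $\mathfrak A^*/\gamma$. For a set $\mathtt W$ of $\gamma$-classes, $M_\gamma(\mathtt W)$ is the Rees quotient of $\mathfrak A^*/\gamma$ by the ideal of classes not $\le$ any element of $\mathtt W$, and $\mathbb M_\gamma(\mathtt W)$ is the monoid variety it generates. Here $a^+t$ denotes the $\gamma$-class $\{a^kt:k\ge2\}$. *)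

(* Defs.v *)
From mathcomp Require Import all_boot.
Set Implicit Arguments. Unset Strict Implicit. Unset Printing Implicit Defensive.

Definition word := seq nat.

Record monoid := Monoid {
  mcar :> Type;
  mop : mcar -> mcar -> mcar;
  munit : mcar;
  mopA : forall x y z, mop x (mop y z) = mop (mop x y) z;
  mop1l : forall x, mop munit x = x;
  mop1r : forall x, mop x munit = x }.

Definition meval (M : monoid) (f : nat -> M) (w : word) : M :=
  foldr (fun a acc => mop (f a) acc) (munit M) w.

Definition msat (M : monoid) (u v : word) : Prop :=
  forall f : nat -> M, meval f u = meval f v.

(* A monoid variety is presented by a set of identities Sigma (Birkhoff):
   V = class of all monoids satisfying Sigma. *)
Definition identities := word -> word -> Prop.

Definition in_variety (Sigma : identities) (M : monoid) : Prop :=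
  forall u v, Sigma u v -> msat M u v.

Definition vsat (Sigma : identities) (u v : word) : Prop :=
  forall M : monoid, in_variety Sigma M -> msat M u v.

Definition isoterm (Sigma : identities) (w : word) : Prop :=
  forall w', vsat Sigma w w' -> w' = w.

Inductive tau1 : word -> word -> Prop :=
| tau1_step p a s : tau1 (p ++ a :: s) (p ++ a :: a :: s)
| tau1_refl u : tau1 u u
| tau1_sym u v : tau1 u v -> tau1 v u
| tau1_trans u v w : tau1 u v -> tau1 v w -> tau1 u w.

Definition gamma (u v : word) : Prop :=
  tau1 u v /\ (forall x : nat, (2 <= count_mem x u) = (2 <= count_mem x v)).

(* [v] <= [u] in A^*/gamma : [u] = [p][v][s] *)
Definition gle (v u : word) : Prop :=
  exists p s, gamma u (p ++ v ++ s).

(* M_gamma(W), W given by a list of representatives of gamma-classes.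
   x lies in the ideal iff its class is not <= any element of W. *)
Definition in_ideal (W : seq word) (x : word) : Prop :=
  ~ (exists2 w, w \in W & gle x w).

(* equality of images in the Rees quotient M_gamma(W) *)
Definition rees_eq (W : seq word) (x y : word) : Prop :=
  gamma x y \/ (in_ideal W x /\ in_ideal W y).

Definition wsubst (sigma : nat -> word) (w : word) : word :=
  flatten (map sigma w).

(* M_gamma(W) satisfies u ~ v: since A^* ->> M_gamma(W) is a surjective
   monoid homomorphism, this holds iff all substitutions of words into u, v
   give elements equal in M_gamma(W). *)
Definition Mgamma_sat (W : seq word) (u v : word) : Prop :=
  forall sigma : nat -> word, rees_eq W (wsubst sigma u) (wsubst sigma v).

Definition Mgamma_in (W : seq word) (Sigma : identities) : Prop :=
  forall u v, Sigma u v -> Mgamma_sat W u v.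

Definition let_a : nat := 0.
Definition let_t : nat := 1.
Definition let_x : nat := 0.
Definition let_s : nat := 2.

(* the gamma-class a^+ t = {a^k t : k >= 2}, represented by a a t *)
Definition aplus_t : seq word := [:: [:: let_a; let_a; let_t]].

(* Main.v *)
Require Import Defs.
From mathcomp Require Import all_boot.
From mathcomp Require Import zify.
From Stdlib Require Import Classical.
Set Implicit Arguments. Unset Strict Implicit. Unset Printing Implicit Defensive.

Lemma meval_cat (M : monoid) (f : nat -> M) u v :
  meval f (u ++ v) = mop (meval f u) (meval f v).
Proof. elim: u => [|a u IH] /=; first by rewrite mop1l. by rewrite IH mopA. Qed.

Lemma meval_wsubst (M : monoid) (f : nat -> M) s u :
  meval f (wsubst s u) = meval (fun a => meval f (s a)) u.
Proof. elim: u => [|a u IH] //=. by rewrite /wsubst /= meval_cat -IH. Qed.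

Lemma vsat_subst Sg u v s : vsat Sg u v -> vsat Sg (wsubst s u) (wsubst s v).
Proof. move=> H M HM f. rewrite !meval_wsubst. exact: H. Qed.
Lemma vsat_sym Sg u v : vsat Sg u v -> vsat Sg v u.
Proof. move=> H M HM f. by rewrite H. Qed.
Lemma vsat_catl Sg w u v : vsat Sg u v -> vsat Sg (w ++ u) (w ++ v).
Proof. move=> H M HM f. by rewrite !meval_cat (H M HM f). Qed.

Definition sig1 (c : nat) : nat -> word := fun a => if a == c then [:: let_t] else [::].
Lemma wsubst_sig1 c u : wsubst (sig1 c) u = nseq (count_mem c u) let_t.
Proof.
elim: u => [|a u IH] //=. rewrite /wsubst /= -/(wsubst _ u) IH /sig1. by case: (a == c).
Qed.

Lemma pow_small Sg i j : isoterm Sg [:: let_t] ->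
  vsat Sg (nseq i let_t) (nseq j let_t) -> i <= 1 -> i = j.
Proof.
move=> HI; case: i => [|[|i]] H // _.
- have := HI _ (vsat_catl [:: let_t] H). move/(congr1 size). rewrite /= size_nseq. by case: j {H}.
- have := HI _ H. move/(congr1 size). by rewrite size_nseq.
Qed.

Lemma count_rel Sg u v c : isoterm Sg [:: let_t] -> vsat Sg u v ->
  count_mem c u = count_mem c v \/ (2 <= count_mem c u /\ 2 <= count_mem c v).
Proof.
move=> HI H. have H' := vsat_subst (sig1 c) H. rewrite !wsubst_sig1 in H'.
case: (leqP (count_mem c u) 1) => Hu; first by left; exact: pow_small HI H' Hu.
case: (leqP (count_mem c v) 1) => Hv; first by left; symmetry; exact: pow_small HI (vsat_sym H') Hv.
by right.
Qed.

Definition Qw (w : word) := sorted leq w && all (fun x => x <= 1) w.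
Lemma sorted_dup (p s : word) a : sorted leq (p ++ a :: a :: s) = sorted leq (p ++ a :: s).
Proof.
case: p => [|c p] /=; first by rewrite leqnn.
by rewrite !cat_path /= leqnn.
Qed.

Lemma tau1_Q u v : tau1 u v -> Qw u = Qw v.
Proof.
elim=> [p a s|w|x y _ ->|x y z _ -> _ ->] //.
rewrite /Qw sorted_dup !all_cat /=. by case: (a <= 1).
Qed.

Lemma p_form (p : word) : sorted leq p -> all (fun x => x <= 1) p -> count_mem 1 p <= 1 ->
  exists m, p = nseq m 0 \/ p = nseq m 0 ++ [:: 1].
Proof.
elim: p => [|a p IH] /=; first by move=> *; exists 0; left.
move=> Hs /andP[Ha Hall] Hc.
case: a Ha Hs Hc => [|[|a]] // _ Hs Hc.
- have [m Hm] := IH (path_sorted Hs) Hall Hc. exists m.+1. by case: Hm => ->; [left|right].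
- exists 0; right. case: p Hs Hall Hc {IH} => [|b p] //= /andP[Hb _] /andP[Hb1 _].
  have -> : b = 1 by lia.
  by rewrite eqxx.
Qed.

Lemma q_nseq (q : word) c0 : (forall c, c != c0 -> count_mem c q = 0) ->
  q = nseq (count_mem c0 q) c0.
Proof.
move=> H.
have Hall : all (pred1 c0) q.
  apply/allP => x Hx /=. apply/negPn/negP => Hne.
  by move: (H x Hne) => /count_memPn; rewrite Hx.
move: (Hall); rewrite all_count => /eqP ->. exact/all_pred1P.
Qed.

Lemma q_split (q : word) : (forall c, c != 0 -> c != 1 -> count_mem c q = 0) ->
  count_mem 1 q = 1 -> exists i j, q = nseq i 0 ++ 1 :: nseq j 0.
Proof.
move=> H H1.
have Hin : 1 \in q by rewrite -has_pred1 has_count H1.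
case/splitPr: Hin H H1 => p1 p2 H H1.
have Hp : forall c, c != 0 -> count_mem c p1 = 0 /\ count_mem c p2 = 0.
  move=> c Hc. case: (eqVneq c 1) => [->|Hc1].
    move: H1; rewrite count_cat /=. lia.
  move: (H c Hc Hc1); rewrite count_cat /= eq_sym (negbTE Hc1). lia.
exists (count_mem 0 p1), (count_mem 0 p2).
rewrite -(q_nseq (c0 := 0) (q := p1)); last by move=> c /Hp [].
by rewrite -(q_nseq (c0 := 0) (q := p2)); last by move=> c /Hp [].
Qed.

Lemma tau1_pow a n s : tau1 (nseq n.+1 a ++ s) (a :: s).
Proof.
elim: n => [|n IH]; first exact: tau1_refl.
apply: (tau1_trans _ IH). apply: tau1_sym. exact: (tau1_step [::] a (nseq n a ++ s)).
Qed.

Lemma gamma_refl u : gamma u u.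
Proof. by split; [apply: tau1_refl|]. Qed.

Lemma gamma_sym u v : gamma u v -> gamma v u.
Proof. by case=> H1 H2; split; [apply: tau1_sym|move=> x; rewrite H2]. Qed.

Lemma gamma_nseq m k s : 2 <= m -> 2 <= k -> gamma (nseq m 0 ++ s) (nseq k 0 ++ s).
Proof.
case: m => [|m] //; case: k => [|k] // Hm Hk; split.
  apply: tau1_trans (tau1_pow _ _ _) (tau1_sym (tau1_pow _ _ _)).
move=> x; rewrite !count_cat !count_nseq /=.
case: (0 == x) => /=; lia.
Qed.
Definition mfold (M : monoid) (g : nat -> M) (C : M) (w : word) :=
  foldr (fun a acc => mop (g a) acc) C w.

Lemma mfold_meval (M : monoid) (g : nat -> M) C u : mfold g C u = mop (meval g u) C.
Proof. elim: u => [|a u IH] /=; first by rewrite mop1l. by rewrite /mfold /= -/(mfold g C u) IH mopA. Qed.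

Lemma vsat_ctx Sg u v (M : monoid) : vsat Sg u v -> in_variety Sg M ->
  forall g C, mfold g C u = mfold (M:=M) g C v.
Proof. move=> H HM g C. by rewrite !mfold_meval (H M HM g). Qed.

Lemma mfold_cat (M : monoid) (g : nat -> M) C u v : mfold g C (u ++ v) = mfold g (mfold g C v) u.
Proof. by rewrite /mfold foldr_cat. Qed.

Lemma mfold_nseq (M : monoid) (g : nat -> M) C n c : mfold g C (nseq n c) = iter n (mop (g c)) C.
Proof. by elim: n => //= n <-. Qed.

Definition asg (M : monoid) (A B : M) : nat -> M := fun n => if n == 0 then A else B.

Section Sem.
Variable M : monoid.
Variable F1 : forall A B C : M, mop A (mop B (mop A C)) = mop A (mop B (mop A (mop A C))).

Lemma F2 (A C : M) : mop A (mop A C) = mop A (mop A (mop A C)).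
Proof. by have := F1 A (munit M) C; rewrite !mop1l. Qed.

Lemma Pw n (A C : M) : 2 <= n -> iter n (mop A) C = mop A (mop A C).
Proof.
elim: n => [|[|[|n]] IH] // _. rewrite iterS IH //. by rewrite -F2.
Qed.

Lemma goal_comm (X T S : M) (Cm : forall A B C : M, mop A (mop B C) = mop B (mop A C)) :
  mop X (mop T (mop X (mop S (munit M)))) = mop X (mop T (mop X (mop S (mop X (munit M))))).
Proof. by rewrite (Cm S X) -F1. Qed.

Lemma goal_main m i j (X T S : M) :
  (forall A B C : M, iter m (mop A) (mop B C) = iter i (mop A) (mop B (iter j (mop A) C))) ->
  2 <= m -> 1 <= j -> 2 <= i + j ->
  mop X (mop T (mop X (mop S (munit M)))) = mop X (mop T (mop X (mop S (mop X (munit M))))).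
Proof.
move=> Hm Hm2 Hj Hij.
have Hm' : forall B C, mop X (mop X (mop B C)) = iter i (mop X) (mop B (iter j (mop X) C)).
  by move=> B C; rewrite -Hm Pw.
case: i Hm Hm' Hij => [|i] Hm Hm' Hij.
  have Hc : forall B C, mop X (mop X (mop B C)) = mop B (mop X (mop X C)).
    by move=> B C; rewrite Hm' /= Pw.
  by rewrite F1 Hc [in RHS]F1 Hc -F2.
have E1 : forall B C, mop X (mop T (mop X (mop B C))) =
   mop X (mop T (mop X (mop B (iter j (mop X) C)))).
  move=> B C. rewrite F1 Hm'.
  clear Hm. case: i {Hm' Hij} => [|i]; first by []. by rewrite Pw // -F1.
case: j Hj {Hij Hm' Hm} E1 => [|[|j]] // _ E1.
by rewrite E1 Pw // (E1 S (mop X (munit M))) Pw // -F2.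
Qed.
End Sem.

Lemma sem_comm Sg :
  vsat Sg [:: let_x; let_t; let_x] [:: let_x; let_t; let_x; let_x] ->
  vsat Sg [:: 0; 1] [:: 1; 0] ->
  vsat Sg [:: let_x; let_t; let_x; let_s] [:: let_x; let_t; let_x; let_s; let_x].
Proof.
move=> Hx Hc M HM f.
have F1 : forall A B C : M, mop A (mop B (mop A C)) = mop A (mop B (mop A (mop A C))).
  by move=> A B C; have := vsat_ctx Hx HM (asg A B) C.
have Cm : forall A B C : M, mop A (mop B C) = mop B (mop A C).
  by move=> A B C; have := vsat_ctx Hc HM (asg A B) C.
rewrite /=. exact: goal_comm.
Qed.

Lemma sem_main Sg m i j :
  vsat Sg [:: let_x; let_t; let_x] [:: let_x; let_t; let_x; let_x] ->
  vsat Sg (nseq m 0 ++ [:: 1]) (nseq i 0 ++ 1 :: nseq j 0) ->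
  2 <= m -> 1 <= j -> 2 <= i + j ->
  vsat Sg [:: let_x; let_t; let_x; let_s] [:: let_x; let_t; let_x; let_s; let_x].
Proof.
move=> Hx Hc Hm Hj Hij M HM f.
have F1 : forall A B C : M, mop A (mop B (mop A C)) = mop A (mop B (mop A (mop A C))).
  by move=> A B C; have := vsat_ctx Hx HM (asg A B) C.
have Hw : forall A B C : M, iter m (mop A) (mop B C) = iter i (mop A) (mop B (iter j (mop A) C)).
  move=> A B C; have := vsat_ctx Hc HM (asg A B) C.
  by rewrite !mfold_cat /= !mfold_nseq.
rewrite /=. exact: goal_main Hw Hm Hj Hij.
Qed.

Lemma form_of p : (exists2 w, w \in aplus_t & gle p w) ->
  exists m, p = nseq m 0 \/ p = nseq m 0 ++ [:: 1].
Proof.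
case=> w; rewrite inE => /eqP -> [pre [suf [Ht Hc]]].
have HQ := tau1_Q Ht. have := Hc 1. rewrite /= => /esym/negbT; rewrite -ltnNge => Hc1.
move: HQ; rewrite /Qw /= => /esym/andP[Hs Ha].
apply: p_form.
- exact: (cat_sorted2 (cat_sorted2 Hs).2).1.
- by move: Ha; rewrite !all_cat => /and3P[].
- move: Hc1; rewrite !count_cat => H. apply: leq_trans (leq_addr (count_mem 1 suf) _) _. rewrite -ltnS. exact: leq_ltn_trans (leq_addl _ _) H.
Qed.

Lemma KL Sg p q : isoterm Sg [:: let_t] ->
  vsat Sg [:: let_x; let_t; let_x] [:: let_x; let_t; let_x; let_x] ->
  vsat Sg p q ->
  (exists m, p = nseq m 0 \/ p = nseq m 0 ++ [:: 1]) ->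
  gamma p q \/ vsat Sg [:: let_x; let_t; let_x; let_s] [:: let_x; let_t; let_x; let_s; let_x].
Proof.
move=> HI Hx Hpq [m [Hp|Hp]]; have HR c := count_rel c HI Hpq; subst p.
- left.
  have Hq : q = nseq (count_mem 0 q) 0.
    apply: q_nseq => c Hc. case: (HR c); rewrite count_nseq /= eq_sym (negbTE Hc) mul0n.
      by move<-.
    by case.
  have H0 := HR 0. rewrite count_nseq /= mul1n in H0.
  set k := count_mem 0 q in Hq H0. clearbody k. subst q.
  case: H0 => [->|[H1 H2]]; first exact: gamma_refl.
  have := gamma_nseq [::] H1 H2. by rewrite !cats0.
- have Hq1 : count_mem 1 q = 1.
    case: (HR 1); rewrite count_cat count_nseq /=; first by move<-.
    by case.
  have [i [j Hq]] : exists i j, q = nseq i 0 ++ 1 :: nseq j 0.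
    apply: q_split => // c Hc0 Hc1. case: (HR c);
      rewrite count_cat count_nseq /= ![_ == c]eq_sym (negbTE Hc0) (negbTE Hc1) mul0n /=.
      by move<-.
    by case.
  subst q. clear Hq1. have H0 := HR 0.
  rewrite !count_cat /= !count_nseq /= in H0.
  have {}H0 : m = i + j \/ (2 <= m /\ 2 <= i + j) by case: H0; lia.
  clear HR. case: j Hpq H0 => [|j] Hpq H0.
    left. rewrite addn0 in H0. case: H0 => [->|[H1 H2]]; first exact: gamma_refl.
    exact: gamma_nseq.
  right.
  have [[E1 [E2 E3]]|[H1 H2]] : (m = 1 /\ i = 0 /\ j = 0) \/ (2 <= m /\ 2 <= i + j.+1).
    case: H0 => [E|[H1 H2]]; last by right.
    case: m E Hpq => [|[|m]] E Hpq; [lia|left; lia|right; lia].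
  + subst. exact: sem_comm Hx Hpq.
  + exact: sem_main Hx Hpq H1 _ H2.
Qed.

Theorem lemma4p1 (Sigma : identities) :
  isoterm Sigma [:: let_t] ->
  vsat Sigma [:: let_x; let_t; let_x] [:: let_x; let_t; let_x; let_x] ->
  ~ Mgamma_in aplus_t Sigma ->
  vsat Sigma [:: let_x; let_t; let_x; let_s] [:: let_x; let_t; let_x; let_s; let_x].
Proof.
move=> HI Hx HM. apply: NNPP => Hng. apply: HM => u v Huv s.
have Hpq : vsat Sigma (wsubst s u) (wsubst s v).
  apply: vsat_subst => M HM' f. exact: HM' u v Huv f.
case: (classic (exists2 w, w \in aplus_t & gle (wsubst s u) w)) => [Ep|Ip].
  case: (KL HI Hx Hpq (form_of Ep)) => [G|G]; [by left|by case: Hng].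
case: (classic (exists2 w, w \in aplus_t & gle (wsubst s v) w)) => [Eq|Iq].
  case: (KL HI Hx (vsat_sym Hpq) (form_of Eq)) => [G|G]; [left; exact: gamma_sym|by case: Hng].
by right.
Qed.
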